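(* Let the finite algebra be $M_{N_i}(\mathbb{C}) \oplus M_{N_j}(\mathbb{C})$ and let the finite Hilbert space of a real, even finite spectral triple of KO-dimension $6$ consist of two building blocks $\mathcal{B}_i$ and $\mathcal{B}_j$ of the first type (i.e. two copies $M_{N_i}(\mathbb{C})_L\oplus M_{N_i}(\mathbb{C})_R$ and $M_{N_j}(\mathbb{C})_L\oplus M_{N_j}(\mathbb{C})_R$ of the adjoint representations, with opposite grading), together with the representation $\mathbf{N}_i\otimes\mathbf{N}_j^o$ (grading $+$) and its conjugate $\mathbf{N}_j\otimes\mathbf{N}_i^o$ (grading $-$). Then on the basis $$\mathbf{N}_i\otimes\mathbf{N}_j^o \oplus M_{N_i}(\mathbb{C})_L \oplus M_{N_i}(\mathbb{C})_R \oplus M_{N_j}(\mathbb{C})_L \oplus M_{N_j}(\mathbb{C})_R \oplus \mathbf{N}_j\otimes\mathbf{N}_i^o$$ the most general finite Dirac operator is $$D_F = \begin{pmatrix} 0 & 0 & A & 0 & B & 0\\ 0 & 0 & M_i & 0 & 0 & JA^*J^*\\ A^* & M_i^* & 0 & 0 & 0 & 0\\ 0 & 0 & 0 & 0 & M_j & JB^*J^*\\ B^* & 0 & 0 & M_j^* & 0 & 0\\ 0 & JAJ^* & 0 & JBJ^* & 0 & 0 \end{pmatrix}$$ with $A : M_{N_i}(\mathbb{C})_R \to \mathbf{N}_i\otimes\mathbf{N}_j^o$ and $B : M_{N_j}(\mathbb{C})_R \to \mathbf{N}_i\otimes\mathbf{N}_j^o$, and $M_i$, $M_j$ maps between the two copies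 of the respective adjoint representations.
   Context: $D_F$ is required to be self-adjoint, to anticommute with the grading $\gamma_F$, to commute with the real structure $J_F$ (which interchanges the $L$ and $R$ copies while taking adjoints, $J_F(m,n)=(n^*,m^* )$, and maps $\mathbf{N}_i\otimes\mathbf{N}_j^o$ to its conjugate), and to satisfy the first-order condition $[[D_F,a],Jb J^{-1}]=0$ for all $a,b$ in the algebra. *)

(* Defs.v *)
(* Complex numbers are modelled by algC (algebraic complex
   numbers, a numClosedFieldType with conjugation z^* ). *)
From HB Require Import structures.
From mathcomp Require Import all_boot all_order all_algebra algC.
Set Implicit Arguments. Unset Strict Implicit. Unset Printing Implicit Defensive.
Import Order.TTheory GRing.Theory Num.Theory.
Local Open Scope ring_scope.

Definition mxadj (m n : nat) (x : 'M[algC]_(m, n)) : 'M[algC]_(n, m) :=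
  (map_mx (fun z : algC => z^*) x)^T.

Definition hs (m n : nat) (x y : 'M[algC]_(m, n)) : algC :=
  \sum_(i < m) \sum_(j < n) (x i j)^* * y i j.

(** Hilbert-space adjoint (w.r.t. the Hilbert--Schmidt inner products) of a
    linear map between matrix spaces, written out in the standard basis
    (delta_mx k l) of matrix units:  <f x, y> = <x, opadj f y>. *)
Definition opadj (m n p q : nat) (f : 'M[algC]_(m, n) -> 'M[algC]_(p, q))
  (y : 'M[algC]_(p, q)) : 'M[algC]_(m, n) :=
  \matrix_(k < m, l < n)
     \sum_(r < p) \sum_(s < q) ((f (delta_mx k l)) r s)^* * y r s.

(** The finite Hilbert space, in the order of the basis of the paper:
    N_i (x) N_j^o  (+)  M_{N_i}(C)_L  (+)  M_{N_i}(C)_R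
                   (+)  M_{N_j}(C)_L  (+)  M_{N_j}(C)_R  (+)  N_j (x) N_i^o.
    N_i (x) N_j^o is realised as N_i x N_j complex matrices. *)
Notation Hsp ni nj :=
  ('M[algC]_(ni, nj) * 'M[algC]_ni * 'M[algC]_ni * 'M[algC]_nj * 'M[algC]_nj
   * 'M[algC]_(nj, ni))%type.

Definition hip (ni nj : nat) (h k : Hsp ni nj) : algC :=
  let: (X, mL, mR, nL, nR, Y) := h in
  let: (X', mL', mR', nL', nR', Y') := k in
  hs X X' + hs mL mL' + hs mR mR' + hs nL nL' + hs nR nR' + hs Y Y'.

Definition rep (ni nj : nat) (a : 'M[algC]_ni) (b : 'M[algC]_nj)
  (h : Hsp ni nj) : Hsp ni nj :=
  let: (X, mL, mR, nL, nR, Y) := h in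
  (a *m X, a *m mL, a *m mR, b *m nL, b *m nR, b *m Y).

Definition grad (ni nj : nat) (h : Hsp ni nj) : Hsp ni nj :=
  let: (X, mL, mR, nL, nR, Y) := h in
  (X, mL, - mR, nL, - nR, - Y).

Definition Jr (ni nj : nat) (h : Hsp ni nj) : Hsp ni nj :=
  let: (X, mL, mR, nL, nR, Y) := h in
  (mxadj Y, mxadj mR, mxadj mL, mxadj nR, mxadj nL, mxadj X).


Definition opcomm (ni nj : nat) (S U : Hsp ni nj -> Hsp ni nj)
  (h : Hsp ni nj) : Hsp ni nj := S (U h) - U (S h).

(** D is a finite Dirac operator for the real even spectral triple:
    self-adjoint, anticommutes with the grading, commutes with J, and
    satisfies the first-order condition [[D, a], J b J^{-1}] = 0
    (here J^{-1} = J). *)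
Definition finite_Dirac (ni nj : nat) (D : Hsp ni nj -> Hsp ni nj) : Prop :=
  [/\ (forall h k, hip (D h) k = hip h (D k)),
      (forall h, D (grad h) = - grad (D h)),
      (forall h, D (Jr h) = Jr (D h)) &
      (forall (a c : 'M[algC]_ni) (b d : 'M[algC]_nj) (h : Hsp ni nj),
         opcomm (opcomm D (rep a b)) (fun k => Jr (rep c d (Jr k))) h = 0)].

(** The block form of the theorem, applied to a vector h, on the basis
    (N_i (x) N_j^o, M_{N_i L}, M_{N_i R}, M_{N_j L}, M_{N_j R}, N_j (x) N_i^o):
        row 1:  A mR + B nR
        row 2:  M_i mR + (J A^* J^* ) Y
        row 3:  A^* X + M_i^* mL
        row 4:  M_j nR + (J B^* J^* ) Y
        row 5:  B^* X + M_j^* nL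
        row 6:  (J A J^* ) mL + (J B J^* ) nL                                  *)
Definition block_Dirac (ni nj : nat)
  (A : 'M[algC]_ni -> 'M[algC]_(ni, nj)) (B : 'M[algC]_nj -> 'M[algC]_(ni, nj))
  (Mi : 'M[algC]_ni -> 'M[algC]_ni) (Mj : 'M[algC]_nj -> 'M[algC]_nj)
  (h : Hsp ni nj) : Hsp ni nj :=
  let: (X, mL, mR, nL, nR, Y) := h in
  (A mR + B nR,
   Mi mR + mxadj (opadj A (mxadj Y)),
   opadj A X + opadj Mi mL,
   Mj nR + mxadj (opadj B (mxadj Y)),
   opadj B X + opadj Mj nL,
   mxadj (A (mxadj mL)) + mxadj (B (mxadj nL))).

(* Main.v *)
Require Import Defs.
From HB Require Import structures.
From mathcomp Require Import all_boot all_order all_algebra algC.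
Set Implicit Arguments. Unset Strict Implicit. Unset Printing Implicit Defensive.
Import GRing.Theory Num.Theory.
Local Open Scope ring_scope.

Lemma mxadj0 m n : mxadj (0 : 'M[algC]_(m,n)) = 0.
Proof. by apply/matrixP=> i j; rewrite !mxE conjC0. Qed.
Lemma mxadjK m n (x : 'M[algC]_(m,n)) : mxadj (mxadj x) = x.
Proof. by apply/matrixP=> i j; rewrite !mxE conjCK. Qed.
Lemma neg0 m n (x : 'M[algC]_(m,n)) : x = - x -> x = 0.
Proof.
move=> H; apply/matrixP=> i j; move/matrixP/(_ i j): H; rewrite !mxE => H.
have : (x i j) *+ 2 = 0 by rewrite mulr2n {1}H addNr.
by move/eqP; rewrite mulrn_eq0 /= => /eqP.
Qed.
Lemma hs0r m n (x : 'M[algC]_(m,n)) : hs x 0 = 0.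
Proof. by rewrite /hs; apply: big1 => i _; apply: big1 => j _; rewrite mxE mulr0. Qed.
Lemma hs0l m n (x : 'M[algC]_(m,n)) : hs 0 x = 0.
Proof. by rewrite /hs; apply: big1 => i _; apply: big1 => j _; rewrite mxE conjC0 mul0r. Qed.
Lemma hs_delta m n (k : 'I_m) (l : 'I_n) (z : 'M[algC]_(m,n)) : hs (delta_mx k l) z = z k l.
Proof.
rewrite /hs (bigD1 k) //= [X in _ + X]big1; last first.
  by move=> i /negbTE ik; apply: big1 => j _; rewrite mxE ik /= conjC0 mul0r.
rewrite addr0 (bigD1 l) //= [X in _ + X]big1; last first.
  by move=> j /negbTE jl; rewrite mxE jl andbF conjC0 mul0r.
by rewrite mxE !eqxx conjC1 mul1r !addr0.
Qed.
Lemma opadj_eq m n p q (f : 'M[algC]_(m,n) -> 'M[algC]_(p,q)) g :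
  (forall x y, hs (f x) y = hs x (g y)) -> forall y, g y = opadj f y.
Proof.
move=> H y; apply/matrixP=> k l; rewrite /opadj mxE.
by have := H (delta_mx k l) y; rewrite /hs => ->; rewrite -/(hs _ _) hs_delta.
Qed.

Definition Pp ni nj (h : Hsp ni nj) : Hsp ni nj :=
  (h.1.1.1.1.1, h.1.1.1.1.2, h.1.1.1.2, 0, 0, 0).
Definition Qp ni nj (h : Hsp ni nj) : Hsp ni nj :=
  (0, h.1.1.1.1.2, h.1.1.1.2, 0, 0, h.2).
Lemma repP ni nj (h : Hsp ni nj) : rep 1 0 h = Pp h.
Proof. by case: h => [[[[[? ?] ?] ?] ?] ?]; rewrite /= !mul1mx !mul0mx. Qed.
Lemma RQ ni nj (h : Hsp ni nj) : Jr (rep 1 0 (Jr h)) = Qp h.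
Proof. by case: h => [[[[[? ?] ?] ?] ?] ?]; rewrite /= !mul1mx !mul0mx !mxadj0 !mxadjK. Qed.

Lemma FOc ni nj (D : {linear Hsp ni nj -> Hsp ni nj}) : finite_Dirac D ->
  forall h, D (Pp (Qp h)) - Pp (D (Qp h)) - Qp (D (Pp h) - Pp (D h)) = 0.
Proof. by case=> _ _ _ H h; have := H 1 1 0 0 h; rewrite /opcomm !RQ !repP. Qed.

Lemma pairE1 ni nj (u v : Hsp ni nj) : (u + v) = (u.1 + v.1, u.2 + v.2). Proof. by []. Qed.

Definition Af ni nj (D : Hsp ni nj -> Hsp ni nj) (z : 'M[algC]_ni) : 'M[algC]_(ni,nj) :=
  (D (0,0,z,0,0,0)).1.1.1.1.1.
Definition Bf ni nj (D : Hsp ni nj -> Hsp ni nj) (z : 'M[algC]_nj) : 'M[algC]_(ni,nj) :=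
  (D (0,0,0,0,z,0)).1.1.1.1.1.
Definition Mif ni nj (D : Hsp ni nj -> Hsp ni nj) (z : 'M[algC]_ni) : 'M[algC]_ni :=
  (D (0,0,z,0,0,0)).1.1.1.1.2.
Definition Mjf ni nj (D : Hsp ni nj -> Hsp ni nj) (z : 'M[algC]_nj) : 'M[algC]_nj :=
  (D (0,0,0,0,z,0)).1.1.2.


Lemma hipE ni nj (u w : Hsp ni nj) : hip u w =
  hs u.1.1.1.1.1 w.1.1.1.1.1 + hs u.1.1.1.1.2 w.1.1.1.1.2 + hs u.1.1.1.2 w.1.1.1.2
  + hs u.1.1.2 w.1.1.2 + hs u.1.2 w.1.2 + hs u.2 w.2.
Proof. by case: u => [[[[[? ?] ?] ?] ?] ?]; case: w => [[[[[? ?] ?] ?] ?] ?]. Qed.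
Lemma JrE ni nj (u : Hsp ni nj) : Jr u =
  (mxadj u.2, mxadj u.1.1.1.2, mxadj u.1.1.1.1.2, mxadj u.1.2, mxadj u.1.1.2, mxadj u.1.1.1.1.1).
Proof. by case: u => [[[[[? ?] ?] ?] ?] ?]. Qed.

Lemma gradpos ni nj (D : {linear Hsp ni nj -> Hsp ni nj}) : finite_Dirac D ->
  forall h, grad h = h ->
  [/\ (D h).1.1.1.1.1 = 0, (D h).1.1.1.1.2 = 0 & (D h).1.1.2 = 0].
Proof.
case=> _ Hgr _ _ h Eh; have := Hgr h; rewrite Eh.
case: (D h) => [[[[[v1 v2] v3] v4] v5] v6] /= [] e1 e2 _ e4 _ _.
by split; apply: neg0.
Qed.
Lemma gradneg ni nj (D : {linear Hsp ni nj -> Hsp ni nj}) : finite_Dirac D ->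
  forall h, grad h = - h ->
  [/\ (D h).1.1.1.2 = 0, (D h).1.2 = 0 & (D h).2 = 0].
Proof.
case=> _ Hgr _ _ h Eh; have := Hgr h; rewrite Eh linearN => /oppr_inj.
case: (D h) => [[[[[v1 v2] v3] v4] v5] v6] /= [] e3 e5 e6.
by split; apply: neg0.
Qed.

Lemma sub00 m n (x : 'M[algC]_(m,n)) : 0 - 0 - (x - 0) = 0 -> x = 0.
Proof. by rewrite !subr0 sub0r => /eqP; rewrite oppr_eq0 => /eqP. Qed.

Lemma col1 ni nj (D : {linear Hsp ni nj -> Hsp ni nj}) : finite_Dirac D ->
  forall X, D (X,0,0,0,0,0) = (0,0,opadj (Af D) X,0,opadj (Bf D) X,0).
Proof.
move=> HD X; have := FOc HD (X,0,0,0,0,0).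
have [|g1 g2 g4] := @gradpos _ _ D HD (X,0,0,0,0,0); first by rewrite /= !oppr0.
have := HD; case=> Hsa _ _ _.
have S3 : forall y, (D (y,0,0,0,0,0)).1.1.1.2 = opadj (Af D) y.
  apply: opadj_eq => x y; have := Hsa (0,0,x,0,0,0) (y,0,0,0,0,0).
  by rewrite !hipE /= !hs0r !hs0l !addr0 !add0r.
have S5 : forall y, (D (y,0,0,0,0,0)).1.2 = opadj (Bf D) y.
  apply: opadj_eq => x y; have := Hsa (0,0,0,0,x,0) (y,0,0,0,0,0).
  by rewrite !hipE /= !hs0r !hs0l !addr0 !add0r.
rewrite -S3 -S5.
have D0 : D (0,0,0,0,0,0) = 0 := linear0 D.
move: g1 g2 g4.
case E: (D (X,0,0,0,0,0)) => [[[[[v1 v2] v3] v4] v5] v6] /= -> -> ->.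
rewrite /Pp /Qp /= D0 /= => -[] _ _ _ _ _ /sub00 ->.
by [].
Qed.

Lemma pairN (U V : zmodType) (u : U) (v : V) : - ((u, v) : U * V) = (- u, - v).
Proof. by []. Qed.

Ltac simp0 := rewrite ?subr0 ?sub0r ?subrr ?oppr0 ?addr0 ?add0r ?opprK.

Lemma col3 ni nj (D : {linear Hsp ni nj -> Hsp ni nj}) : finite_Dirac D ->
  forall m, D (0,0,m,0,0,0) = (Af D m, Mif D m, 0, 0, 0, 0).
Proof.
move=> HD m; have := FOc HD (0,0,m,0,0,0).
have [|g3 g5 g6] := @gradneg _ _ D HD (0,0,m,0,0,0); first by rewrite !pairN /= !oppr0.
rewrite /Af /Mif; move: g3 g5 g6.
case E: (D (0,0,m,0,0,0)) => [[[[[v1 v2] v3] v4] v5] v6] /= -> -> ->.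
rewrite /Pp /Qp /= => /(congr1 (fun w => w.1.1.2)) /=.
by simp0; move=> ->.
Qed.

Lemma col5 ni nj (D : {linear Hsp ni nj -> Hsp ni nj}) : finite_Dirac D ->
  forall n, D (0,0,0,0,n,0) = (Bf D n, 0, 0, Mjf D n, 0, 0).
Proof.
move=> HD n; have := FOc HD (0,0,0,0,n,0).
have [|g3 g5 g6] := @gradneg _ _ D HD (0,0,0,0,n,0); first by rewrite !pairN /= !oppr0.
have D0 : D (0,0,0,0,0,0) = 0 := linear0 D.
rewrite /Bf /Mjf; move: g3 g5 g6.
case E: (D (0,0,0,0,n,0)) => [[[[[v1 v2] v3] v4] v5] v6] /= -> -> ->.
rewrite /Pp /Qp /= D0 /= => /(congr1 (fun w => w.1.1.1.1.2)) /=.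
by simp0; move/eqP; rewrite ?oppr_eq0 => /eqP ->.
Qed.

Lemma JD ni nj (D : {linear Hsp ni nj -> Hsp ni nj}) : finite_Dirac D ->
  forall h, D h = Jr (D (Jr h)).
Proof.
case=> _ _ HJ _ h; rewrite -HJ.
by case: h => [[[[[? ?] ?] ?] ?] ?]; rewrite /= !mxadjK.
Qed.

Lemma col2 ni nj (D : {linear Hsp ni nj -> Hsp ni nj}) : finite_Dirac D ->
  forall m, D (0,m,0,0,0,0) = (0,0,opadj (Mif D) m,0,0,mxadj (Af D (mxadj m))).
Proof.
move=> HD.
have J2 : forall m, D (0,m,0,0,0,0) =
   (0,0,mxadj (Mif D (mxadj m)),0,0,mxadj (Af D (mxadj m))).
  by move=> m; rewrite JD //= !mxadj0 col3 //= !mxadj0.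
have := HD; case=> Hsa _ _ _.
have S3 : forall y, (D (0,y,0,0,0,0)).1.1.1.2 = opadj (Mif D) y.
  apply: opadj_eq => x y; have := Hsa (0,0,x,0,0,0) (0,y,0,0,0,0).
  by rewrite !hipE /= !hs0r !hs0l !addr0 !add0r.
move=> m; rewrite -S3 J2 //.
Qed.

Lemma col4 ni nj (D : {linear Hsp ni nj -> Hsp ni nj}) : finite_Dirac D ->
  forall n, D (0,0,0,n,0,0) = (0,0,0,0,opadj (Mjf D) n,mxadj (Bf D (mxadj n))).
Proof.
move=> HD.
have J4 : forall n, D (0,0,0,n,0,0) =
   (0,0,0,0,mxadj (Mjf D (mxadj n)),mxadj (Bf D (mxadj n))).
  by move=> n; rewrite JD //= !mxadj0 col5 //= !mxadj0.
have := HD; case=> Hsa _ _ _.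
have S5 : forall y, (D (0,0,0,y,0,0)).1.2 = opadj (Mjf D) y.
  apply: opadj_eq => x y; have := Hsa (0,0,0,0,x,0) (0,0,0,y,0,0).
  by rewrite !hipE /= !hs0r !hs0l !addr0 !add0r.
move=> n; rewrite -S5 J4 //.
Qed.

Lemma col6 ni nj (D : {linear Hsp ni nj -> Hsp ni nj}) : finite_Dirac D ->
  forall Y, D (0,0,0,0,0,Y) =
   (0, mxadj (opadj (Af D) (mxadj Y)), 0, mxadj (opadj (Bf D) (mxadj Y)), 0, 0).
Proof. by move=> HD Y; rewrite JD //= !mxadj0 col1 //= !mxadj0. Qed.

Lemma pairD (U V : zmodType) (u u' : U) (v v' : V) :
  ((u, v) : U * V) + (u', v') = (u + u', v + v').
Proof. by []. Qed.
Lemma pairZ (R : pzRingType) (U V : lmodType R) (a : R) (u : U) (v : V) :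
  a *: ((u, v) : U * V) = (a *: u, a *: v).
Proof. by []. Qed.

Lemma Af_lin ni nj (D : {linear Hsp ni nj -> Hsp ni nj}) : linear (Af D).
Proof.
move=> a x y; rewrite /Af.
have -> : (0,0,a *: x + y,0,0,0) = a *: (0,0,x,0,0,0) + (0,0,y,0,0,0) :> Hsp ni nj.
  by rewrite !pairZ !pairD !scaler0 !addr0.
by rewrite linearP.
Qed.
Lemma Bf_lin ni nj (D : {linear Hsp ni nj -> Hsp ni nj}) : linear (Bf D).
Proof.
move=> a x y; rewrite /Bf.
have -> : (0,0,0,0,a *: x + y,0) = a *: (0,0,0,0,x,0) + (0,0,0,0,y,0) :> Hsp ni nj.
  by rewrite !pairZ !pairD !scaler0 !addr0.
by rewrite linearP.
Qed.
Lemma Mif_lin ni nj (D : {linear Hsp ni nj -> Hsp ni nj}) : linear (Mif D).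
Proof.
move=> a x y; rewrite /Mif.
have -> : (0,0,a *: x + y,0,0,0) = a *: (0,0,x,0,0,0) + (0,0,y,0,0,0) :> Hsp ni nj.
  by rewrite !pairZ !pairD !scaler0 !addr0.
by rewrite linearP.
Qed.
Lemma Mjf_lin ni nj (D : {linear Hsp ni nj -> Hsp ni nj}) : linear (Mjf D).
Proof.
move=> a x y; rewrite /Mjf.
have -> : (0,0,0,0,a *: x + y,0) = a *: (0,0,0,0,x,0) + (0,0,0,0,y,0) :> Hsp ni nj.
  by rewrite !pairZ !pairD !scaler0 !addr0.
by rewrite linearP.
Qed.
HB.instance Definition _ ni nj (D : {linear Hsp ni nj -> Hsp ni nj}) :=
  GRing.isLinear.Build algC _ _ _ (Af D) (Af_lin D).
HB.instance Definition _ ni nj (D : {linear Hsp ni nj -> Hsp ni nj}) :=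
  GRing.isLinear.Build algC _ _ _ (Bf D) (Bf_lin D).
HB.instance Definition _ ni nj (D : {linear Hsp ni nj -> Hsp ni nj}) :=
  GRing.isLinear.Build algC _ _ _ (Mif D) (Mif_lin D).
HB.instance Definition _ ni nj (D : {linear Hsp ni nj -> Hsp ni nj}) :=
  GRing.isLinear.Build algC _ _ _ (Mjf D) (Mjf_lin D).

Theorem mainTheorem2 (ni nj : nat) (hni : (0 < ni)%N) (hnj : (0 < nj)%N)
  (D : {linear Hsp ni nj -> Hsp ni nj}) :
  finite_Dirac D ->
  exists (A : {linear 'M[algC]_ni -> 'M[algC]_(ni, nj)})
         (B : {linear 'M[algC]_nj -> 'M[algC]_(ni, nj)})
         (Mi : {linear 'M[algC]_ni -> 'M[algC]_ni})
         (Mj : {linear 'M[algC]_nj -> 'M[algC]_nj}),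
    forall h : Hsp ni nj, D h = block_Dirac A B Mi Mj h.
Proof.
move=> HD; exists (Af D), (Bf D), (Mif D), (Mjf D).
case=> [[[[[X mL] mR] nL] nR] Y].
have -> : (X,mL,mR,nL,nR,Y) = (X,0,0,0,0,0) + (0,mL,0,0,0,0) + (0,0,mR,0,0,0)
   + (0,0,0,nL,0,0) + (0,0,0,0,nR,0) + (0,0,0,0,0,Y) :> Hsp ni nj.
  by rewrite !pairD !addr0 !add0r.
rewrite !linearD col1 // col2 // col3 // col4 // col5 // col6 //.
rewrite !pairD /= !addr0 !add0r.
by [].
Qed.
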